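(* Let $n\ge 3$ and let $\mathcal{H}$ be the associating hypergraph on $M(D_n,2)$. Then the strong chromatic number is $\overline{\psi}(\mathcal{H})=4n$.
   Context: $D_n=\langle x,y\mid x^n=y^2=1,\ xy=yx^{-1}\rangle$. $M(D_n,2)=\{(g,\alpha): g\in D_n,\ \alpha\in\mathbb{Z}_2\}$ with $(g_1,\alpha_1)\circ(g_2,\alpha_2)=(g_1^{1-\alpha_2} g_2^{(-1)^{\alpha_1}} g_1^{\alpha_2},\ \alpha_1+\alpha_2)$. The associating hypergraph $\mathcal{H}$ has vertex set $M(D_n,2)$ ($4n$ vertices), and a 3-element set $\{a,b,c\}$ of distinct elements is a hyperedge when $(a\circ b)\circ c=a\circ(b\circ c)$. A strong coloring assigns colors to vertices so that any two vertices lying in a common hyperedge receive different colors; $\overline{\psi}(\mathcal{H})$ is the minimum number of colors in a strong coloring. *)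

(* Defs.v *)
From mathcomp Require Import all_boot.
Set Implicit Arguments. Unset Strict Implicit. Unset Printing Implicit Defensive.

(* Concrete model of the dihedral group D_n = <x, y | x^n = y^2 = 1, xy = yx^-1>:
   the element (k, s) : 'I_n * bool stands for x^k y^s (0 <= k < n, s in {0,1}). *)
Definition Dn (n : nat) : finType := ('I_n * bool)%type.

Definition modI n (i : 'I_n) (m : nat) : 'I_n :=
  Ordinal (ltn_pmod m (leq_ltn_trans (leq0n i) (ltn_ord i))).

(* x^a y^s * x^b y^t = x^(a + (-1)^s b) y^(s+t) *)
Definition Dmul n (g h : Dn n) : Dn n :=
  let: (a, s) := g in let: (b, t) := h in
  (modI a (a + (if s then n - b else b)), s (+) t).

Definition Done n (g : Dn n) : Dn n := (modI g.1 0, false).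

(* inverse: (x^a)^-1 = x^(n-a), (x^a y)^-1 = x^a y *)
Definition Dinv n (g : Dn n) : Dn n :=
  let: (a, s) := g in if s then (a, true) else (modI a (n - a), false).

(* g ^ e for e in Z_2 = {0,1} (as a nonnegative exponent) *)
Definition Dpow n (g : Dn n) (e : bool) : Dn n := if e then g else Done g.

(* g ^ ((-1)^e) *)
Definition Dpow_sign n (g : Dn n) (e : bool) : Dn n := if e then Dinv g else g.

(* M(D_n, 2) = D_n x Z_2, with Z_2 represented by bool (addition = xor) *)
Definition MD (n : nat) : finType := (Dn n * bool)%type.

(* (g1,a1) o (g2,a2) = (g1^(1-a2) g2^((-1)^a1) g1^a2, a1 + a2) *)
Definition Mop n (u v : MD n) : MD n :=
  let: (g1, a1) := u in let: (g2, a2) := v in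
  (Dmul (Dmul (Dpow g1 (~~ a2)) (Dpow_sign g2 a1)) (Dpow g1 a2), a1 (+) a2).

Definition assoc_triple n (a b c : MD n) : bool :=
  Mop (Mop a b) c == Mop a (Mop b c).

Definition hyperedge n (a b c : MD n) : bool :=
  [&& a != b, b != c, a != c &
   [|| assoc_triple a b c, assoc_triple a c b, assoc_triple b a c,
       assoc_triple b c a, assoc_triple c a b | assoc_triple c b a]].

Definition co_hyperedge n (u v : MD n) : bool := [exists w : MD n, hyperedge u v w].

Definition strong_coloring n k (c : {ffun MD n -> 'I_k}) : bool :=
  [forall u : MD n, forall v : MD n, co_hyperedge u v ==> (c u != c v)].

Definition strong_colorable n (k : nat) : bool :=
  [exists c : {ffun MD n -> 'I_k}, strong_coloring c].

Lemma strong_colorable_ex n : exists k, strong_colorable n k.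
Proof.
exists #|MD n|; apply/existsP; exists [ffun u => enum_rank u].
apply/forallP => u; apply/forallP => v; apply/implyP => /existsP [w].
case/and4P => uv _ _ _; rewrite !ffunE.
by apply: contra uv => /eqP /enum_rank_inj ->.
Qed.

Definition strong_chromatic_number (n : nat) : nat :=
  ex_minn (@strong_colorable_ex n).

(* Main.v *)
Require Import Defs.
From mathcomp Require Import all_boot zify ring.

Section Aux.
Variable n : nat.
Hypothesis n0 : 0 < n.

Definition idD : Dn n := (Ordinal n0, false).
Definition e0 : MD n := (idD, false).

Lemma Dmul1g (h : Dn n) : Dmul idD h = h.
Proof. case: h => b t; rewrite /Dmul /=; congr pair; apply: val_inj => /=.
by rewrite add0n modn_small. Qed.

Lemma Dmulg1 (g : Dn n) : Dmul g idD = g.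
Proof. case: g => a s; rewrite /Dmul /= addbF; congr pair; apply: val_inj => /=.
case: s; rewrite ?subn0 ?addn0 ?modnDr modn_small //. Qed.

Lemma Done_id (g : Dn n) : Done g = idD.
Proof. rewrite /Done /idD; congr pair; apply: val_inj => /=; by rewrite mod0n. Qed.

Lemma Dpow_id e : Dpow idD e = idD.
Proof. by case: e => //=; rewrite Done_id. Qed.

Lemma Dpow_sign_id e : Dpow_sign idD e = idD.
Proof. case: e => //=; rewrite /Dinv /idD; congr pair; apply: val_inj => /=.
by rewrite subn0 modnn. Qed.

Lemma Mop1 v : Mop e0 v = v.
Proof. case: v => g a; rewrite /Mop /e0 !Dpow_id (_ : Dpow_sign g false = g) // Dmul1g Dmulg1 //. Qed.

Lemma Mop1r v : Mop v e0 = v.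
Proof. case: v => g a; rewrite /Mop /e0 Dpow_sign_id /= Done_id !Dmulg1 addbF //. Qed.

Lemma assoc_e0 b c : assoc_triple e0 b c.
Proof. by rewrite /assoc_triple !Mop1. Qed.

Lemma all_co (u v : MD n) : u != v -> co_hyperedge u v.
Proof.
move=> uv; apply/existsP.
pose w1 : MD n := (idD, true).
pose w2 : MD n := ((Ordinal n0, true), false).
have e0w1 : e0 != w1 by [].
have e0w2 : e0 != w2 by [].
have w1w2 : w1 != w2 by [].
have fin : forall a b c : MD n, a != b -> b != c -> a != c ->
    (e0 == a) || (e0 == b) || (e0 == c) -> hyperedge a b c.
  move=> a b c ab bc ac H; rewrite /hyperedge ab bc ac /=.
  by case/orP: H => [/orP [] | ] /eqP <-; rewrite assoc_e0 ?orbT.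
have [ue|ue] := eqVneq u e0.
  subst u.
  have [vw|vw] := eqVneq v w1.
    subst v; exists w2; apply: fin; first [exact: e0w1 | exact: e0w2 | exact: w1w2 | exact: uv | exact: ue | exact: ve | exact: uw | exact: vw | (rewrite eq_sym; first [exact: e0w1 | exact: e0w2 | exact: w1w2 | exact: uv | exact: ue | exact: ve | exact: uw | exact: vw]) | by rewrite eqxx ?orbT].
  exists w1; apply: fin; first [exact: e0w1 | exact: e0w2 | exact: w1w2 | exact: uv | exact: ue | exact: ve | exact: uw | exact: vw | (rewrite eq_sym; first [exact: e0w1 | exact: e0w2 | exact: w1w2 | exact: uv | exact: ue | exact: ve | exact: uw | exact: vw]) | by rewrite eqxx ?orbT].
have [ve|ve] := eqVneq v e0.
  subst v.
  have [uw|uw] := eqVneq u w1.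
    move: uv; rewrite uw => uv; exists w2; apply: fin; first [exact: e0w1 | exact: e0w2 | exact: w1w2 | exact: uv | exact: ue | exact: ve | exact: uw | exact: vw | (rewrite eq_sym; first [exact: e0w1 | exact: e0w2 | exact: w1w2 | exact: uv | exact: ue | exact: ve | exact: uw | exact: vw]) | by rewrite eqxx ?orbT].
  exists w1; apply: fin; first [exact: e0w1 | exact: e0w2 | exact: w1w2 | exact: uv | exact: ue | exact: ve | exact: uw | exact: vw | (rewrite eq_sym; first [exact: e0w1 | exact: e0w2 | exact: w1w2 | exact: uv | exact: ue | exact: ve | exact: uw | exact: vw]) | by rewrite eqxx ?orbT].
exists e0; apply: fin; first [exact: e0w1 | exact: e0w2 | exact: w1w2 | exact: uv | exact: ue | exact: ve | exact: uw | exact: vw | (rewrite eq_sym; first [exact: e0w1 | exact: e0w2 | exact: w1w2 | exact: uv | exact: ue | exact: ve | exact: uw | exact: vw]) | by rewrite eqxx ?orbT].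
Qed.

Lemma colorable_ge k : strong_colorable n k -> #|MD n| <= k.
Proof.
case/existsP => c /forallP Hc.
have inj : injective c.
  move=> u v cuv; apply/eqP; apply/negPn; apply/negP => uv.
  by move: (Hc u) => /forallP /(_ v) /implyP /(_ (all_co u v uv)); rewrite cuv eqxx.
by have := leq_card _ inj; rewrite card_ord.
Qed.

Lemma colorable_card : strong_colorable n #|MD n|.
Proof.
apply/existsP; exists [ffun u => enum_rank u].
apply/forallP => u; apply/forallP => v; apply/implyP => /existsP [w].
case/and4P => uv _ _ _; rewrite !ffunE.
by apply: contra uv => /eqP /enum_rank_inj ->.
Qed.

End Aux.

Theorem mainTheorem9 (n : nat) (hn : 3 <= n) :
  strong_chromatic_number n = 4 * n.
Proof.
have n0 : 0 < n by apply: leq_trans hn.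
have -> : 4 * n = #|MD n|.
  by rewrite /MD /Dn !card_prod card_ord card_bool; ring.
rewrite /strong_chromatic_number; case: ex_minnP => m Hm Hmin.
apply/eqP; rewrite eqn_leq (Hmin _ (colorable_card n)) /=.
exact: colorable_ge n0 m Hm.
Qed.
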